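(* Let $X$ be a simple chain. (1) If $X$ is rigid, then the group $(\mathrm{Aut}(X),\tau_p)$, and hence also $(\mathrm{Aut}(X),\tau_\partial)$, is not Roelcke precompact. (2) If $X$ is ultrahomogeneous, then the group $(\mathrm{Aut}(X),\tau_\partial)$, and hence also $(\mathrm{Aut}(X),\tau_p)$, is Roelcke precompact.
   Context: A chain is a linearly ordered set; $\mathrm{Aut}(X)$ is its group of order-preserving bijections. $X$ is homogeneous if $\mathrm{Aut}(X)$ acts transitively. An interval is a convex subset. An interval $J$ is regular if for all $x,y\in J$ and $g\in\mathrm{Aut}(X)$, $g(x)\in J$ implies $g(y)\in J$. A homogeneous chain is simple if it has no proper regular intervals (i.e. the only nonempty regular intervals are singletons and $X$). A homogeneous chain is rigid if for any $x,y\in X$ there is exactly one $g\in\mathrm{Aut}(X)$ with $g(x)=y$. $X$ is ultrahomogeneous if for every $n$ and all $x_1<\dots<x_n$, $y_1<\dots<y_n$ in $X$ there is $g\in\mathrm{Aut}(X)$ with $g(x_k)=y_k$. $\tau_p$ is the topology of pointwise convergence on $\mathrm{Aut}(X)$ where $X$ carries the linear order topology; $\tau_\partial$ is the permutation topology, whose identity neighbourhood base consists of pointwise stabilizers of finite subsets of $X$. A topological group is Roelcke precompact if its Roelcke uniformity (the greatest lower bound of the left and right uniformities) is totally bounded. *)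

(* Defs.v *)
From mathcomp Require Import all_boot all_order.
Set Implicit Arguments. Unset Strict Implicit. Unset Printing Implicit Defensive.
Import Order.TTheory.
Local Open Scope order_scope.

Section Chains.
Context {d : Order.disp_t} (X : orderType d).

Definition is_aut (g : X -> X) : Prop :=
  bijective g /\ (forall x y : X, x < y -> g x < g y).

Definition homogeneous : Prop :=
  forall x y : X, exists g, is_aut g /\ g x = y.

Definition is_interval (J : X -> Prop) : Prop :=
  forall x y z : X, J x -> J z -> x <= y -> y <= z -> J y.

Definition regular_interval (J : X -> Prop) : Prop :=
  is_interval J /\
  forall (x y : X) (g : X -> X), J x -> J y -> is_aut g -> J (g x) -> J (g y).

Definition simple_chain : Prop :=
  homogeneous /\
  forall J : X -> Prop, regular_interval J -> (exists x, J x) ->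
    (exists x, forall y, J y <-> y = x) \/ (forall y, J y).

Definition rigid : Prop :=
  homogeneous /\
  forall x y : X, exists g, is_aut g /\ g x = y /\
    forall h, is_aut h -> h x = y -> forall z, h z = g z.

Definition ultrahomogeneous : Prop :=
  forall (n : nat) (xs ys : 'I_n -> X),
    (forall i j : 'I_n, (i < j)%N -> xs i < xs j) ->
    (forall i j : 'I_n, (i < j)%N -> ys i < ys j) ->
    exists g, is_aut g /\ forall k, g (xs k) = ys k.

(* Linear order topology on X: basic open sets are X, open rays and open
   intervals; [obasic oa ob] = {y | a < y (if oa = Some a) and y < b (if ob = Some b)}. *)
Definition obasic (oa ob : option X) (y : X) : Prop :=
  (match oa with Some a => a < y | None => True end) /\
  (match ob with Some b => y < b | None => True end).

Definition order_open (O : X -> Prop) : Prop :=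
  forall x, O x -> exists oa ob, obasic oa ob x /\ forall y, obasic oa ob y -> O y.

(* Neighbourhoods of the identity in (Aut(X), tau_p), the topology of pointwise
   convergence (X with the order topology): U contains a finite intersection of
   subbasic open sets {g | g x_i \in O_i} containing id (i.e. x_i \in O_i). *)
Definition tau_p_nbhd (U : (X -> X) -> Prop) : Prop :=
  exists (n : nat) (pts : 'I_n -> X) (O : 'I_n -> X -> Prop),
    (forall i, order_open (O i) /\ O i (pts i)) /\
    forall g, is_aut g -> (forall i, O i (g (pts i))) -> U g.

(* Neighbourhoods of the identity in (Aut(X), tau_partial), the permutation
   topology: U contains the pointwise stabilizer of a finite subset of X. *)
Definition tau_partial_nbhd (U : (X -> X) -> Prop) : Prop :=
  exists (n : nat) (pts : 'I_n -> X),
    forall g, is_aut g -> (forall i, g (pts i) = pts i) -> U g.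

(* Roelcke precompactness of Aut(X) with the group topology whose identity
   neighbourhoods are given by [nbhd]: the Roelcke uniformity has as a base the
   entourages {(g,h) | h \in U g U}, U an identity neighbourhood; total
   boundedness means that for every such U there is a finite F \subseteq Aut(X)
   with Aut(X) = U F U. *)
Definition roelcke_precompact (nbhd : ((X -> X) -> Prop) -> Prop) : Prop :=
  forall U, nbhd U ->
    exists (n : nat) (F : 'I_n -> X -> X),
      (forall i, is_aut (F i)) /\
      forall g, is_aut g ->
        exists i u v, is_aut u /\ is_aut v /\ U u /\ U v /\
          forall z, g z = u (F i (v z)).

End Chains.

(* Main.v *)
Require Import Defs.
From Stdlib Require Import ClassicalEpsilon Classical.
From mathcomp Require Import all_boot all_order.
Set Implicit Arguments. Unset Strict Implicit. Unset Printing Implicit Defensive.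
Import Order.TTheory.
Local Open Scope order_scope.

Section Aux.
Context {d : Order.disp_t} (X : orderType d).
Implicit Types (f g h u : X -> X) (x y z : X).

Lemma aut_lt f : is_aut f -> forall x y, (f x < f y) = (x < y).
Proof.
move=> [_ Hf] x y; case: (ltgtP x y) => [H|H|->]; first by rewrite Hf.
- by apply/negbTE; rewrite -leNgt ltW // Hf.
- by rewrite ltxx.
Qed.

Lemma aut_le f : is_aut f -> forall x y, (f x <= f y) = (x <= y).
Proof. by move=> Hf x y; rewrite !leNgt aut_lt. Qed.

Lemma aut_inj f : is_aut f -> injective f.
Proof.
move=> Hf x y E; apply/eqP; rewrite eq_le -(aut_le Hf x y) -(aut_le Hf y x) E; by rewrite lexx.
Qed.

Lemma aut_comp f g : is_aut f -> is_aut g -> is_aut (f \o g).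
Proof.
move=> [bf Hf] [bg Hg]; split; first exact: bij_comp.
by move=> x y H /=; apply Hf; apply Hg.
Qed.

Lemma aut_id : is_aut (@id X).
Proof. split => //; exact: (Bijective (g:=id)). Qed.

Lemma aut_invP f : is_aut f ->
  exists fi, [/\ is_aut fi, cancel f fi & cancel fi f].
Proof.
move=> Hf; case: (Hf) => [[fi K1 K2] _]; exists fi; split => //.
split; first by exists f.
by move=> x y H; rewrite -(aut_lt Hf) !K2.
Qed.

Lemma aut_max f g : is_aut f -> is_aut g ->
  is_aut (fun z => Order.max (f z) (g z)).
Proof.
move=> Hf Hg.
have mono : forall x y, x < y -> Order.max (f x) (g x) < Order.max (f y) (g y).
  move=> x y H; rewrite gt_max !lt_max.
  by rewrite !(aut_lt Hf) !(aut_lt Hg) H orbT.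
split => //.
have [fi [_ fK Kf]] := aut_invP Hf.
have [gi [_ gK Kg]] := aut_invP Hg.
have K : cancel (fun z => Order.min (fi z) (gi z)) (fun z => Order.max (f z) (g z)).
  move=> z; case: (leP (fi z) (gi z)) => H.
  - rewrite Kf; apply/max_idPl; rewrite -{2}(Kg z) aut_le //.
  - rewrite Kg; apply/max_idPr; rewrite -{2}(Kf z) aut_le // ltW //.
have inj : injective (fun z => Order.max (f z) (g z)).
  move=> x y E; case: (ltgtP x y) => // H; have := mono _ _ H;
  by rewrite E ltxx.
exists (fun z => Order.min (fi z) (gi z)) => //; exact: inj_can_sym.
Qed.

Lemma rigid_agree : rigid X -> forall f g x, is_aut f -> is_aut g -> f x = g x ->
  forall z, f z = g z.
Proof.
move=> [_ R] f g x Hf Hg E z.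
have [k [_ [_ U]]] := R x (f x).
by rewrite (U f Hf erefl) (U g Hg (esym E)).
Qed.

Lemma rigid_lt : rigid X -> forall u h x, is_aut u -> is_aut h -> u x < h x ->
  forall y, u y < h y.
Proof.
move=> Rg u h x Hu Hh Lx y.
case: (ltgtP (u y) (h y)) => // H.
- have Hm := aut_max Hu Hh.
  have E1 : Order.max (u y) (h y) = u y by rewrite max_l // ltW.
  have := @rigid_agree Rg _ _ y Hm Hu E1 x.
  by rewrite max_r ?ltW // => E; move: Lx; rewrite -E ltxx.
- by move: Lx; rewrite (rigid_agree Rg Hu Hh H) ltxx.
Qed.

Lemma seq_ub (x0 : X) (s : seq X) : exists M, forall y, y \in s -> y <= M.
Proof.
elim: s => [|a s [M HM]]; first by exists x0.
exists (Order.max a M) => y; rewrite inE => /orP [/eqP ->|/HM H];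
by rewrite le_max ?lexx ?H ?orbT.
Qed.

Lemma fin_ub (x0 : X) n (f : 'I_n -> X) : exists M, forall i, f i <= M.
Proof.
have [M HM] := seq_ub x0 [seq f i | i <- enum 'I_n].
by exists M => i; apply HM; apply: map_f; rewrite mem_enum.
Qed.

Lemma tau_p_of_partial U : tau_p_nbhd (X:=X) U -> tau_partial_nbhd (X:=X) U.
Proof.
move=> [n [pts [O [HO HU]]]]; exists n, pts => g Hg Fix; apply HU => // i.
rewrite Fix; exact: (proj2 (HO i)).
Qed.

Lemma rp_partial_p : roelcke_precompact (@tau_partial_nbhd d X) ->
  roelcke_precompact (@tau_p_nbhd d X).
Proof. by move=> H U HU; apply H; apply tau_p_of_partial. Qed.

Lemma part1 : (exists x y : X, x <> y) -> rigid X ->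
  ~ roelcke_precompact (@tau_p_nbhd d X).
Proof.
move=> [x [y Nxy]] Rg RP.
have [x1 [y1 [Lt _]]] : exists x1 y1 : X, x1 < y1 /\ True.
  case: (ltgtP x y) => H; [by exists x, y| by exists y, x| by []].
have [h [Hh Ehx]] := (proj1 Rg) x1 y1.
have hup : forall z, z < h z.
  by apply: (rigid_lt Rg aut_id Hh (x:=x1)); rewrite Ehx.
have [hi [Hhi hK Khi]] := aut_invP Hh.
pose O := obasic (Some (hi x)) (Some (h x)).
pose U := fun g : X -> X => O (g x).
have NU : @tau_p_nbhd d X U.
  exists 1%N, (fun _ => x), (fun _ => O); split; last by move=> g _ /(_ ord0).
  move=> i; split.
  - by move=> z Oz; exists (Some (hi x)), (Some (h x)).
  - split => //=; rewrite -(aut_lt Hh) Khi; exact: hup.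
have [n [F [HF HRP]]] := RP U NU.
have [M HM] := fin_ub x (fun i => h (F i (h x))).
have [g [Hg Eg]] := (proj1 Rg) x (h M).
have [i [u [v [Hu [Hv [Uu [Uv E]]]]]]] := HRP g Hg.
have : g x < h M; last by rewrite Eg ltxx.
rewrite E.
have L1 : F i (v x) < F i (h x) by rewrite (aut_lt (HF i)); case: Uv.
have L2 : u (F i (v x)) < h (F i (v x)).
  apply: (rigid_lt Rg Hu Hh (x:=x)); by case: Uu.
apply: (lt_trans L2); rewrite (aut_lt Hh); apply: (lt_le_trans L1).
by rewrite -(aut_le Hh) (le_trans (HM i)) // ltW.
Qed.

Lemma uh_gen (x0 : X) : ultrahomogeneous X -> forall m (xs ys : 'I_m -> X),
  (forall i j, xs i < xs j <-> ys i < ys j) ->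
  exists g, is_aut g /\ forall k, g (xs k) = ys k.
Proof.
move=> UH m xs ys Hxy.
pose s := sort <=%O (undup [seq xs i | i <- enum 'I_m]).
have ss : sorted <%O s by rewrite sort_lt_sorted undup_uniq.
have mem : forall j, xs j \in s.
  by move=> j; rewrite mem_sort mem_undup map_f // mem_enum.
pose N := size s.
pose zs := fun k : 'I_N => nth x0 s k.
have zs_in : forall k : 'I_N, exists i, xs i = zs k.
  move=> k; have : zs k \in s by rewrite mem_nth.
  rewrite mem_sort mem_undup => /mapP [i _ ->]; by exists i.
have eqt : forall i j, xs i = xs j -> ys i = ys j.
  move=> i j E; apply/eqP; rewrite eq_le !leNgt; apply/andP; split; apply/negP => H.
  - by have := proj2 (Hxy j i) H; rewrite E ltxx.
  - by have := proj2 (Hxy i j) H; rewrite E ltxx.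
pose ws := fun k : 'I_N => if [pick i | xs i == zs k] is Some i then ys i else x0.
have wsP : forall k i, xs i = zs k -> ws k = ys i.
  move=> k i E; rewrite /ws; case: pickP => [i' /eqP E'|/(_ i)]; last by rewrite E eqxx.
  by apply: eqt; rewrite E E'.
have inc : forall k l : 'I_N, (k < l)%N -> zs k < zs l.
  move=> k l kl; rewrite /zs lt_sorted_ltn_nth //; by rewrite inE ltn_ord.
have incw : forall k l : 'I_N, (k < l)%N -> ws k < ws l.
  move=> k l kl; have [i Ei] := zs_in k; have [j Ej] := zs_in l.
  rewrite (wsP _ _ Ei) (wsP _ _ Ej); apply/(Hxy i j); rewrite Ei Ej; exact: inc.
have [g [Hg Eg]] := UH N zs ws inc incw.
exists g; split => // j.
have Hk : (index (xs j) s < N)%N by rewrite index_mem.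
have Ek : zs (Ordinal Hk) = xs j by rewrite /zs /= nth_index.
by rewrite -Ek Eg; apply: wsP; rewrite Ek.
Qed.

Lemma part2 (x0 : X) : ultrahomogeneous X -> roelcke_precompact (@tau_partial_nbhd d X).
Proof.
move=> UH U [n [pts HU]].
pose T := {ffun 'I_n * 'I_n -> bool * bool}.
pose tp := fun g : X -> X => [ffun ij : 'I_n * 'I_n =>
   (g (pts ij.1) < pts ij.2, pts ij.2 < g (pts ij.1))] : T.
have rep : forall t : T, exists g, is_aut g /\
   ((exists g', is_aut g' /\ tp g' = t) -> tp g = t).
  move=> t; case: (classic (exists g', is_aut g' /\ tp g' = t)) => [[g' [H1 H2]]|NE].
  - by exists g'.
  - by exists id; split; [exact: aut_id | move=> /NE].
pose Fr := fun t => proj1_sig (constructive_indefinite_description _ (rep t)).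
have HFr : forall t, is_aut (Fr t) /\ ((exists g', is_aut g' /\ tp g' = t) -> tp (Fr t) = t).
  move=> t; exact: (proj2_sig (constructive_indefinite_description _ (rep t))).
exists #|{: T}|, (fun k => Fr (enum_val k)); split; first by move=> k; case: (HFr (enum_val k)).
move=> g Hg.
pose k := enum_rank (tp g).
set Fk := Fr (enum_val k).
have HFk : is_aut Fk by case: (HFr (enum_val k)).
have Etp : tp Fk = tp g.
  by rewrite /Fk /k enum_rankK; apply: (proj2 (HFr _)); exists g.
have E1 : forall i j, (Fk (pts i) < pts j) = (g (pts i) < pts j).
  move=> i j; have := congr1 (fun t : T => (t (i, j)).1) Etp; by rewrite !ffunE.
have E2 : forall i j, (pts j < Fk (pts i)) = (pts j < g (pts i)).
  move=> i j; have := congr1 (fun t : T => (t (i, j)).2) Etp; by rewrite !ffunE.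
pose xs := fun a : 'I_(n + n) => match split a with inl i => pts i | inr i => Fk (pts i) end.
pose ys := fun a : 'I_(n + n) => match split a with inl i => pts i | inr i => g (pts i) end.
have Hxy : forall a b, xs a < xs b <-> ys a < ys b.
  move=> a b; rewrite /xs /ys; case: (split a) => i; case: (split b) => j //.
  - by rewrite E2.
  - by rewrite E1.
  - by rewrite (aut_lt HFk) (aut_lt Hg).
have [u [Hu Eu]] := uh_gen x0 UH Hxy.
have Eu1 : forall i, u (pts i) = pts i.
  by move=> i; have := Eu (unsplit (inl i)); rewrite /xs /ys unsplitK.
have Eu2 : forall i, u (Fk (pts i)) = g (pts i).
  by move=> i; have := Eu (unsplit (inr i)); rewrite /xs /ys unsplitK.
have [ui [Hui uK Kui]] := aut_invP Hu.
have [Fi [HFi FK KF]] := aut_invP HFk.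
exists k, u, (Fi \o ui \o g); split => //; split.
  by apply: aut_comp => //; apply: aut_comp.
split; first exact: HU.
split.
  apply: HU; first by apply: aut_comp => //; apply: aut_comp.
  by move=> i /=; rewrite -Eu2 uK FK.
by move=> z; change (g z = u (Fk (Fi (ui (g z))))); rewrite KF Kui.
Qed.
End Aux.

Theorem theorem3p3 (d : Order.disp_t) (X : orderType d) :
  (exists x y : X, x <> y) ->
  simple_chain X ->
  (rigid X ->
     ~ roelcke_precompact (@tau_p_nbhd d X) /\
     ~ roelcke_precompact (@tau_partial_nbhd d X)) /\
  (ultrahomogeneous X ->
     roelcke_precompact (@tau_partial_nbhd d X) /\
     roelcke_precompact (@tau_p_nbhd d X)).
Proof.
move=> Hne _; split.
- move=> Rg; split; first exact: part1.
  by move=> H; apply: (part1 Hne Rg); apply: rp_partial_p.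
- move=> UH; case: Hne => [x0 _].
  have H := part2 x0 UH; split => //; exact: rp_partial_p.
Qed.
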